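(* Let $d$ be a positive integer and let $\mu$ be an isotropic Borel probability measure on $\mathbb{S}^{d-1}$ such that $\langle x,y\rangle\ge 0$ for all $x,y$ in the support of $\mu$. Then $\mu$ is the uniform distribution over an orthonormal basis, i.e. $\mu=\frac1d\sum_{j=1}^d\delta_{e_j}$ for some orthonormal basis $e_1,\dots,e_d$ of $\mathbb{R}^d$.
   Context: A Borel probability measure $\mu$ on $\mathbb{S}^{d-1}$ is isotropic if $\int_{\mathbb{S}^{d-1}}xx^T\,d\mu(x)=\frac1d I_d$, equivalently $\int\langle x,y\rangle^2\,d\mu(x)=\frac1d$ for every $y\in\mathbb{S}^{d-1}$. *)

(* Defs.v *)
From HB Require Import structures.
From mathcomp Require Import all_boot all_order all_algebra.
From mathcomp Require Import all_classical all_reals all_analysis.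
Set Implicit Arguments. Unset Strict Implicit. Unset Printing Implicit Defensive.
Import Order.TTheory GRing.Theory Num.Theory.
Import numFieldNormedType.Exports.
Local Open Scope classical_set_scope.
Local Open Scope ring_scope.

(* R^d is represented as row vectors 'rV[R]_d with the product (= Euclidean) topology *)

Definition dotv (R : realType) (d : nat) (x y : 'rV[R]_d) : R := (x *m y^T) 0 0.

Definition sphere (R : realType) (d : nat) : set 'rV[R]_d :=
  [set x | dotv x x = 1].

Definition BorelRd (R : realType) (d : nat) :=
  g_sigma_algebraType (open : set (set 'rV[R]_d)).

Definition msupport (R : realType) (d : nat)
  (mu : set (BorelRd R d) -> \bar R) : set 'rV[R]_d :=
  [set x | forall U : set 'rV[R]_d, open U -> U x -> (0 < mu U)%E].

Definition isotropic (R : realType) (d : nat)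
  (mu : {measure set (BorelRd R d) -> \bar R}) : Prop :=
  forall y : 'rV[R]_d, sphere y ->
    (\int[mu]_x ((dotv (x : 'rV[R]_d) y) ^+ 2)%:E = (d%:R^-1)%:E)%E.

(* Main.v *)
Require Import Defs.
From HB Require Import structures.
From mathcomp Require Import all_boot all_order all_algebra.
From mathcomp Require Import all_classical all_reals all_analysis.
From mathcomp Require Import measurable_realfun ring lra.
Import Order.TTheory GRing.Theory Num.Theory.
Import numFieldNormedType.Exports.
Local Open Scope classical_set_scope.
Local Open Scope ring_scope.
Lemma dotvE (R : realType) d (x y : 'rV[R]_d) : dotv x y = \sum_i x 0 i * y 0 i.
Proof. by rewrite /dotv mxE; apply: eq_bigr => i _; rewrite mxE. Qed.

Lemma dotvC (R : realType) d (x y : 'rV[R]_d) : dotv x y = dotv y x.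
Proof. by rewrite !dotvE; apply: eq_bigr => i _; rewrite mulrC. Qed.

Lemma dotvDl (R : realType) d (x y z : 'rV[R]_d) : dotv (x + y) z = dotv x z + dotv y z.
Proof. by rewrite !dotvE -big_split; apply: eq_bigr => i _; rewrite mxE mulrDl. Qed.

Lemma dotvZl (R : realType) d a (x z : 'rV[R]_d) : dotv (a *: x) z = a * dotv x z.
Proof. by rewrite !dotvE mulr_sumr; apply: eq_bigr => i _; rewrite mxE mulrA. Qed.

Lemma dotvNl (R : realType) d (x z : 'rV[R]_d) : dotv (- x) z = - dotv x z.
Proof. by rewrite -scaleN1r dotvZl mulN1r. Qed.

Lemma dotvBl (R : realType) d (x y z : 'rV[R]_d) : dotv (x - y) z = dotv x z - dotv y z.
Proof. by rewrite dotvDl dotvNl. Qed.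

Lemma dotv_ge0 (R : realType) d (x : 'rV[R]_d) : 0 <= dotv x x.
Proof. by rewrite dotvE; apply: sumr_ge0 => i _; rewrite -expr2 sqr_ge0. Qed.

Lemma dotv_eq0 (R : realType) d (x : 'rV[R]_d) : dotv x x = 0 -> x = 0.
Proof.
rewrite dotvE => /eqP; rewrite psumr_eq0 => [/allP H|i _]; last by rewrite -expr2 sqr_ge0.
apply/rowP => i; rewrite mxE; have := H i (mem_index_enum i).
by rewrite implyTb -expr2 sqrf_eq0 => /eqP.
Qed.

Arguments dotvE {R d}. Arguments dotvC {R d}. Arguments dotvDl {R d}.
Arguments dotvZl {R d}. Arguments dotvNl {R d}. Arguments dotvBl {R d}.
Arguments dotv_ge0 {R d}. Arguments dotv_eq0 {R d}.

Lemma cont_sum (R : realType) d (I : Type) (r : seq I) (F : I -> 'rV[R]_d -> R) :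
  (forall i, continuous (F i)) -> continuous (fun x => \sum_(i <- r) F i x).
Proof.
move=> cF; elim: r => [|a r IH].
  by under eq_fun do rewrite big_nil; apply: cst_continuous.
under eq_fun do rewrite big_cons.
by move=> x; exact: (continuousD (cF a x) (IH x)).
Qed.

Lemma cont_dotl (R : realType) d (y : 'rV[R]_d) : continuous (fun x : 'rV[R]_d => dotv x y).
Proof.
under eq_fun do rewrite dotvE.
apply: cont_sum => i x; apply: (@continuousM R _ (fun x : 'rV[R]_d => x 0 i) (fun=> y 0 i)).
  exact: coord_continuous.
exact: cst_continuous.
Qed.

Lemma cont_dotxx (R : realType) d : continuous (fun x : 'rV[R]_d => dotv x x).
Proof.
under eq_fun do rewrite dotvE.
apply: cont_sum => i x; apply: (@continuousM R _ (fun x : 'rV[R]_d => x 0 i) (fun x => x 0 i));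
  exact: coord_continuous.
Qed.

Lemma open_mes (R : realType) d (U : set 'rV[R]_d) : open U -> measurable (U : set (BorelRd R d)).
Proof. by move=> oU; apply: sub_sigma_algebra. Qed.

Lemma closed_mes (R : realType) d (U : set 'rV[R]_d) : closed U -> measurable (U : set (BorelRd R d)).
Proof.
move=> cU; rewrite -[U]setCK; apply: measurableC; apply: open_mes.
by rewrite openC.
Qed.

Lemma cont_mes (R : realType) d (f : 'rV[R]_d -> R) : continuous f ->
  measurable_fun (setT : set (BorelRd R d)) f.
Proof.
move=> /continuousP cf; apply: (measurability _ (RGenOpens.measurableE R)).
move=> _ [_ [a [b ->] <-]]; rewrite setTI; apply: open_mes.
exact/cf/interval_open.
Qed.

Arguments open_mes {R d U}.
Arguments closed_mes {R d U}.
Arguments cont_mes {R d f}.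

Lemma nsupp_ex (R : realType) d (mu : probability (BorelRd R d) R) (x : 'rV[R]_d) :
  ~ msupport mu x -> exists U : set 'rV[R]_d, [/\ open U, U x & mu U = 0%E].
Proof.
move=> /existsNP [U] /not_implyP [oU] /not_implyP [Ux] /negP; rewrite -leNgt => le0.
exists U; split => //; apply/eqP; by rewrite eq_le le0 measure_ge0.

Qed.

Lemma supp_closed (R : realType) d (mu : probability (BorelRd R d) R) :
  closed (msupport mu).
Proof.
rewrite -openC.
suff : [set A : set 'rV[R]_d | A `<=` A°] (~` msupport mu) by rewrite -openE.
move=> x /nsupp_ex [U [oU Ux mU]].
apply: (@filterS _ _ _ U); last exact: open_nbhs_nbhs.
by move=> y Uy Sy; have := Sy U oU Uy; rewrite mU ltxx.
Qed.

Lemma mx_ballE (R : realType) d (x y : 'rV[R]_d) e :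
  ball x e y <-> 0 < e /\ forall i j, `|x i j - y i j| < e.
Proof. by []. Qed.

Lemma rat_approx (R : realType) (a r : R) : 0 < r -> exists q : rat, `|a - ratr q| < r.
Proof.
move=> r0; have [] := @dense_rat R (ball a r).
- by exists a; apply: ballxx.
- exact: ball_open.
by move=> z [Bz [q _ qz]]; exists q; rewrite qz; move: Bz; rewrite -ball_normE.
Qed.

Lemma nsupp_null (R : realType) d (mu : probability (BorelRd R d) R) :
  mu (~` msupport mu) = 0%E.
Proof.
pose B (j : 'rV[rat]_d * nat) : set 'rV[R]_d := ball (map_mx ratr j.1 : 'rV[R]_d) (j.2.+1%:R^-1 : R).
pose F (k : nat) : set (BorelRd R d) :=
  [set x | exists j, [/\ unpickle k = Some j, mu (B j) = 0%E & B j x]].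
have FN k : mu.-negligible (F k).
  case E: (unpickle k) => [j|]; last first.
    apply: (negligibleS _ (negligible_set0 mu)).
    by move=> x [j' []]; rewrite E.
  have [Bj0|Bj0] := pselect (mu (B j) = 0%E); last first.
    apply: (negligibleS _ (negligible_set0 mu)).
    by move=> x [j' []]; rewrite E => -[<-].
  apply: (@negligibleS _ _ _ mu (B j : set (BorelRd R d))).
    by move=> x [j' []]; rewrite E => -[<-].
  by apply/negligibleP => //; apply: open_mes; exact: ball_open.
have oS : open (~` msupport mu) by rewrite openC; exact: supp_closed.
have := proj1 (@negligibleP _ _ _ mu _ (@open_mes _ _ _ oS)).
apply.
apply: (negligibleS _ (negligible_bigcup FN)).
move=> x /nsupp_ex [U [oU Ux mU]].
have : nbhs x U by apply: open_nbhs_nbhs.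
move=> /nbhs_ballP [e /= e0 eU].
pose n := Num.truncn (2 / e).
have r0 : 0 < n.+1%:R^-1 :> R by rewrite invr_gt0.
have ne : n.+1%:R^-1 + n.+1%:R^-1 <= e :> R.
  have := truncnS_gt (2 / e); rewrite -/n => h.
  rewrite -mulr2n -[_ *+ 2]mulr_natr mulrC ler_pdivrMr ?ltr0n //.
  by move: h; rewrite ltr_pdivrMr // mulrC => /ltW.
have [f Hf] : exists f : 'I_d -> rat, forall i, `|x 0 i - ratr (f i)| < n.+1%:R^-1.
  have := fun i => @rat_approx _ (x 0 i) _ r0.
  by move=> /(choice (P := fun i q => `|x 0 i - ratr q| < n.+1%:R^-1)) [f Hf]; exists f.
pose j := (\row_i f i, n).
have Bx : B j x.
  apply/mx_ballE; split => // i k; rewrite !mxE (ord1 i) distrC; exact: Hf.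
exists (pickle j) => //; exists j; split => //; first exact: pickleK.
apply/eqP; rewrite eq_le measure_ge0 andbT -mU.
apply: le_measure; rewrite ?inE; first by apply: open_mes; exact: ball_open.
  exact: open_mes.
move=> y By; apply: eU; apply: (le_ball ne).
apply: (ball_triangle (ball_sym Bx)); exact: By.
Qed.

Lemma sphere_closed (R : realType) d : closed (sphere (R:=R) (d:=d)).
Proof.
have -> : sphere (R:=R) (d:=d) = (fun x => dotv x x) @^-1` [set 1] by [].
apply: preimage_closed; last exact: closed_eq.
by move=> x _; apply: cont_dotxx.
Qed.

Lemma supp_sphere (R : realType) d (mu : probability (BorelRd R d) R) :
  mu (sphere (R:=R) (d:=d)) = 1%E -> msupport mu `<=` sphere (R:=R) (d:=d).
Proof.
move=> m1 x Sx; apply: contrapT => nx.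
have oC : open (~` sphere (R:=R) (d:=d)) by rewrite openC; exact: sphere_closed.
have := Sx _ oC nx.
rewrite probability_setC; last first.

  have := closed_mes (sphere_closed R d). move=> H. exact H.
by rewrite m1 subee // ltxx.
Qed.

Lemma supp_mes (R : realType) d (mu : probability (BorelRd R d) R) :
  measurable (msupport mu : set (BorelRd R d)).
Proof. have H := closed_mes (@supp_closed _ _ mu); exact H. Qed.

Lemma supp_one (R : realType) d (mu : probability (BorelRd R d) R) :
  mu (msupport mu) = 1%E.
Proof.
have := probability_setC mu (measurableC (@supp_mes _ _ mu)).
by rewrite setCK nsupp_null sube0.
Qed.

Lemma intS (R : realType) d (mu : probability (BorelRd R d) R) (f : 'rV[R]_d -> R) (M : R) :
  continuous f -> (forall x, msupport mu x -> `|f x| <= M) ->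
  mu.-integrable (msupport mu : set (BorelRd R d)) (EFin \o f).
Proof.
move=> cf fM; apply: measurable_bounded_integrable.
- exact: supp_mes.
- by apply: (le_lt_trans (probability_le1 mu (@supp_mes _ _ mu))); rewrite ltey.
- apply: measurable_funS (cont_mes cf) => //.
rewrite /bounded_near; near=> K.
move=> x Sx /=; apply: le_trans (fM x Sx) _.
near: K; apply: nbhs_pinfty_ge; rewrite num_real //.
Unshelve. all: by end_near.
Qed.

Lemma cont_sq (R : realType) d (f : 'rV[R]_d -> R) : continuous f -> continuous (fun x => f x ^+ 2).
Proof. by move=> cf x; under eq_fun do rewrite expr2; exact: (continuousM (cf x) (cf x)). Qed.

Lemma intT_S (R : realType) d (mu : probability (BorelRd R d) R) (f : 'rV[R]_d -> R) :
  continuous f ->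
  (\int[mu]_x (f x)%:E = \int[mu]_(x in (msupport mu : set (BorelRd R d))) (f x)%:E)%E.
Proof.
move=> cf; have mS := @supp_mes _ _ mu.
rewrite -(setUv (msupport mu : set (BorelRd R d))).
rewrite integral_setU //.
- rewrite [X in (_ + X)%E]null_set_integral ?adde0 //.
  + exact: measurableC.
  + apply/measurable_EFinP; apply: measurable_funS (cont_mes cf) => //.
  + exact: nsupp_null.
- exact: measurableC.
- apply/measurable_EFinP; apply: measurable_funS (cont_mes cf) => //.
- by rewrite disj_set2E setICr.
Qed.

Lemma iso_S (R : realType) d (mu : probability (BorelRd R d) R) (y : 'rV[R]_d) :
  isotropic mu -> sphere y ->
  \int[mu]_(x in (msupport mu : set (BorelRd R d))) (dotv x y ^+ 2) = d%:R^-1.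
Proof.
move=> iso sy; rewrite /Rintegral -intT_S; last exact/cont_sq/cont_dotl.
by rewrite iso.
Qed.

Lemma sphere_coord {R : realType} {d} (x : 'rV[R]_d) i : sphere x -> `|x 0 i| <= 1.
Proof.
rewrite /sphere /= dotvE => s1.
have h : x 0 i * x 0 i <= 1.
  by rewrite -s1 (bigD1 i) //= lerDl; apply: sumr_ge0 => j _; rewrite -expr2 sqr_ge0.
have [a0|a0] := lerP 0 (x 0 i).
  by rewrite ger0_norm //; nra.
by rewrite ltr0_norm //; nra.
Qed.

Lemma dot_bound {R : realType} {d} (x v : 'rV[R]_d) : sphere x ->
  `|dotv x v| <= \sum_i `|v 0 i|.
Proof.
move=> sx; rewrite dotvE; apply: le_trans (ler_norm_sum _ _ _) _.
apply: ler_sum => i _; rewrite normrM; apply: ler_piMl => //.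
exact: sphere_coord.
Qed.

Lemma dotvBr {R : realType} {d} (x y z : 'rV[R]_d) : dotv z (x - y) = dotv z x - dotv z y.
Proof. by rewrite dotvC dotvBl !(dotvC z). Qed.

Lemma dotv_sub2 {R : realType} {d} (x y : 'rV[R]_d) : sphere x -> sphere y ->
  dotv (x - y) (x - y) = 2 - 2 * dotv x y.
Proof.
rewrite /sphere /= => sx sy.
rewrite dotvBl !dotvBr sx sy (dotvC y x); lra.
Qed.

Lemma cs_unit {R : realType} {d} (x y : 'rV[R]_d) : sphere x -> sphere y -> dotv x y <= 1.
Proof. move=> sx sy; have := dotv_ge0 (x - y); rewrite dotv_sub2 //; lra. Qed.

Lemma eq_unit {R : realType} {d} (x y : 'rV[R]_d) : sphere x -> sphere y -> dotv x y = 1 -> x = y.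
Proof.
move=> sx sy e1; have := dotv_sub2 _ _ sx sy; rewrite e1 mulr1 subrr.
by move/dotv_eq0/eqP; rewrite subr_eq0 => /eqP.
Qed.

Section Ints.
Context {R : realType} {d : nat} (mu : probability (BorelRd R d) R).
Hypothesis m1 : mu (sphere (R:=R) (d:=d)) = 1%E.
Local Notation S := (msupport mu : set (BorelRd R d)).
Local Notation I f := (\int[mu]_(x in S) f x).

Lemma intS_dot (v : 'rV[R]_d) : mu.-integrable S (EFin \o (fun z => dotv z v)).
Proof.
apply: (@intS _ _ mu _ (\sum_i `|v 0 i|)); first exact: cont_dotl.
by move=> z Sz /=; apply: dot_bound; exact: (supp_sphere _ _ _ m1 _ Sz).
Qed.

Lemma intS_dot2 (v : 'rV[R]_d) : mu.-integrable S (EFin \o (fun z => dotv z v ^+ 2)).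
Proof.
apply: (@intS _ _ mu _ ((\sum_i `|v 0 i|) ^+ 2)); first exact/cont_sq/cont_dotl.
move=> z Sz; have := dot_bound z v (supp_sphere _ _ _ m1 _ Sz).
rewrite normrX; have := normr_ge0 (dotv z v); move: (`|dotv z v|) => a a0 aM.
rewrite !expr2; nra.
Qed.

Lemma intS_coord (i : 'I_d) : mu.-integrable S (EFin \o (fun z : 'rV[R]_d => z 0 i)).
Proof.
apply: (@intS _ _ mu _ 1); first exact: coord_continuous.
by move=> z Sz /=; apply: sphere_coord; exact: (supp_sphere _ _ _ m1 _ Sz).
Qed.

Lemma intS_cst (c : R) : mu.-integrable S (EFin \o (fun z : 'rV[R]_d => c)).
Proof. by apply: (@intS _ _ mu _ `|c|); [exact: cst_continuous|]. Qed.

Lemma Rint_sum (J : Type) (r : seq J) (F : J -> 'rV[R]_d -> R) :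
  (forall j, mu.-integrable S (EFin \o F j)) ->
  I (fun x => \sum_(j <- r) F j x) = \sum_(j <- r) I (F j).
Proof.
move=> iF; have mS := @supp_mes _ _ mu.
elim: r => [|a r IH].
  rewrite big_nil; under eq_Rintegral do rewrite big_nil.
  by rewrite Rintegral_cst // mul0r.
rewrite big_cons; under eq_Rintegral do rewrite big_cons.
rewrite RintegralD //; first by congr (_ + _); exact: IH.
apply: (eq_integrable mS (fun x => \sum_(j <- r) (F j x)%:E)) => //.
  by move=> x _; rewrite sumEFin.
exact: (@integrable_sum _ _ _ mu _ mS _ r (fun=> true) (fun j x => (F j x)%:E) (fun j _ => iF j)).
Qed.

Definition mean : 'rV[R]_d := \row_i I (fun z : 'rV[R]_d => z 0 i).

Lemma Idot (v : 'rV[R]_d) : I (fun z => dotv z v) = dotv mean v.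
Proof.
under eq_Rintegral do rewrite dotvE.
have mS := @supp_mes _ _ mu.
rewrite Rint_sum; last first.
  move=> i; apply: (eq_integrable mS (fun x : BorelRd R d => ((x : 'rV[R]_d) 0 i)%:E * (v 0 i)%:E)%E) => //.
  by apply: integrableZr => //; exact: intS_coord.
rewrite dotvE; apply: eq_bigr => i _; rewrite mxE RintegralZr //.
exact: intS_coord.
Qed.


Lemma intD (f g : 'rV[R]_d -> R) : mu.-integrable S (EFin \o f) -> mu.-integrable S (EFin \o g) ->
  mu.-integrable S (EFin \o (fun x => f x + g x)).
Proof.
move=> iF iG; apply: (eq_integrable (@supp_mes _ _ mu) ((EFin \o f) \+ (EFin \o g))%E) => //.
exact: integrableD (@supp_mes _ _ mu) _ _ iF iG.
Qed.

Lemma intB (f g : 'rV[R]_d -> R) : mu.-integrable S (EFin \o f) -> mu.-integrable S (EFin \o g) ->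
  mu.-integrable S (EFin \o (fun x => f x - g x)).
Proof.
move=> iF iG; apply: (eq_integrable (@supp_mes _ _ mu) ((EFin \o f) \- (EFin \o g))%E) => //.
exact: integrableB (@supp_mes _ _ mu) _ _ iF iG.
Qed.

Lemma intZ (k : R) (f : 'rV[R]_d -> R) : mu.-integrable S (EFin \o f) ->
  mu.-integrable S (EFin \o (fun x => k * f x)).
Proof.
move=> iF; apply: (eq_integrable (@supp_mes _ _ mu) (fun x => k%:E * (EFin \o f) x)%E) => //.
exact: integrableZl (@supp_mes _ _ mu) _ _ iF.
Qed.

Lemma I_cst (c : R) : I (fun _ : 'rV[R]_d => c) = c.
Proof.
have h : (mu : measure (BorelRd R d) R) S = 1%E := @supp_one _ _ mu.
by rewrite Rintegral_cst; [rewrite h mulr1 | exact: supp_mes].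
Qed.

Lemma mean_bound : isotropic mu -> dotv mean mean <= d%:R^-1.
Proof.
move=> iso; have mS := @supp_mes _ _ mu.
have [m0|mpos] := eqVneq (dotv mean mean) 0; first by rewrite m0 invr_ge0.
have mm0 : 0 < dotv mean mean by rewrite lt0r mpos dotv_ge0.
set s := Num.sqrt (dotv mean mean).
have s0 : 0 < s by rewrite sqrtr_gt0.
have ss : s * s = dotv mean mean by rewrite -expr2 sqr_sqrtr // ltW.
set y := s^-1 *: mean.
have sy : sphere y.
  rewrite /sphere /= /y dotvZl dotvC dotvZl -ss mulrA -mulrA [s * s]mulrC.
  by rewrite mulKf ?gt_eqF // mulVf ?gt_eqF.
set c := I (fun z => dotv z y).
have cE : c = s by rewrite /c Idot /y dotvC dotvZl -ss mulKf ?gt_eqF.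
have h0 : 0 <= I (fun z => (dotv z y - c) ^+ 2).
  by apply: Rintegral_ge0 => z _; rewrite sqr_ge0.
have E : I (fun z => (dotv z y - c) ^+ 2) =
    I (fun z => (dotv z y ^+ 2 - (2 * c) * dotv z y) + c ^+ 2).
  by apply: eq_Rintegral => z _; rewrite /=; ring.
have i1 := intS_dot2 y; have i2 := intS_dot y.
have E2 : I (fun z => (dotv z y - c) ^+ 2) = d%:R^-1 - c ^+ 2.
  rewrite E RintegralD //; last 2 first.
  - by apply: intB => //; apply: intZ.
  - exact: intS_cst.
  rewrite RintegralB //; last by apply: intZ.
  rewrite RintegralZl // I_cst -/c iso_S //; ring.
move: h0; rewrite E2 cE -ss expr2; lra.
Qed.


Lemma Lzero (h : 'rV[R]_d -> R) : continuous h -> mu.-integrable S (EFin \o h) ->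
  (forall x, msupport mu x -> 0 <= h x) -> I h <= 0 -> forall x, msupport mu x -> h x = 0.
Proof.
move=> ch ih h0 Ile x Sx; have mS := @supp_mes _ _ mu.
apply/eqP; rewrite eq_le h0 // andbT leNgt; apply/negP => hx.
set c := h x / 2.
have c0 : 0 < c by rewrite /c divr_gt0.
pose U : set 'rV[R]_d := h @^-1` [set r | c < r].
have oU : open U by move/continuousP: ch; apply; exact: open_gt.
have Ux : U x by rewrite /U /= /c; lra.
have mU : measurable (U : set (BorelRd R d)) := open_mes oU.
have pU : (0 < mu U)%E := Sx U oU Ux.
have pUS : (0 < mu (U `&` S))%E.
  have e := measureDI mu mU mS.
  have : (mu : {content set (BorelRd R d) -> \bar R}) (U `\` S) = 0%E.
    apply/eqP; rewrite eq_le measure_ge0 andbT.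
    have <- : mu (~` S) = 0%E := @nsupp_null _ _ mu.
    apply: le_measure; rewrite ?inE.
    - exact: measurableD.
    - exact: measurableC.
    - by move=> z [].
  by move=> e0; rewrite e e0 add0e in pU.
have iE : (I h)%:E = (\int[mu]_(x in S) (h x)%:E)%E := fineK (integrable_fin_num mS ih).
have : (c%:E * mu (U `&` S) <= \int[mu]_(x in S) (h x)%:E)%E.
  rewrite -(integral_indic _ mS mU) -(integralZl_indic mS (fun=> U)) //; last first.
    by move=> c0'; move: c0; rewrite ltNge ltW.
  apply: ge0_le_integral => //.
  - by move=> z _; rewrite lee_fin mulr_ge0 ?(ltW c0) // indicE; case: (_ \in _).
  - apply/measurable_EFinP; apply: measurable_funM => //.
  - apply/measurable_EFinP; apply: measurable_funS (cont_mes ch) => //.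
  - move=> z Sz; rewrite lee_fin indicE; case: (boolP (z \in U)) => zU.
      by rewrite mulr1 ltW //; move: zU; rewrite inE.
    by rewrite mulr0 h0.
rewrite -iE => le1.
have h1 := lt_le_trans (mule_gt0 _ pUS) le1.
have h2 : ((I h)%:E <= 0)%E by rewrite lee_fin.
have c0' : (0 < c%:E)%E by rewrite lte_fin.
by have := lt_le_trans (h1 c0') h2; rewrite ltxx.
Qed.


Lemma set1_closed (s : 'rV[R]_d) : closed [set s].
Proof. exact: accessible_closed_set1 (hausdorff_accessible (@norm_hausdorff _ _)) s. Qed.

Hypothesis iso : isotropic mu.
Hypothesis pos : forall x y : 'rV[R]_d, msupport mu x -> msupport mu y -> 0 <= dotv x y.

Lemma dot01 x z : msupport mu x -> msupport mu z -> 0 <= dotv z x <= 1.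
Proof.
move=> Sx Sz; rewrite pos //=; apply: cs_unit; exact: (supp_sphere _ _ _ m1).
Qed.

Lemma P1 x : msupport mu x -> dotv x mean = d%:R^-1.
Proof.
have mS := @supp_mes _ _ mu.
have Lz := @Lzero (fun x => dotv x mean - d%:R^-1).
have : forall x, msupport mu x -> dotv x mean - d%:R^-1 = 0.
  apply: Lz.
  - by move=> y; exact: (continuousB (@cont_dotl _ _ mean y) (@cst_continuous _ _ _ y)).
  - by apply: intB; [exact: intS_dot | exact: intS_cst].
  - move=> y Sy; rewrite subr_ge0 dotvC -Idot -(@iso_S _ _ mu _ iso (supp_sphere _ _ _ m1 _ Sy)).
    apply: le_Rintegral => //; [exact: intS_dot2 | exact: intS_dot |].
    by move=> z Sz; have := dot01 y z Sy Sz; rewrite expr2; nra.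
  - rewrite RintegralB //; [|exact: intS_dot|exact: intS_cst].
    by rewrite Idot I_cst subr_le0 mean_bound.
by move=> /(_ x) H Sx; apply/eqP; rewrite -subr_eq0 H.
Qed.

Lemma P2 x z : msupport mu x -> msupport mu z -> dotv z x = 0 \/ dotv z x = 1.
Proof.
move=> Sx Sz; have mS := @supp_mes _ _ mu.
have Lz := @Lzero (fun z => dotv z x - dotv z x ^+ 2).
have : dotv z x - dotv z x ^+ 2 = 0.
  apply: Lz => //.
  - by move=> y; exact: (continuousB (@cont_dotl _ _ x y) (@cont_sq _ _ _ (@cont_dotl _ _ x) y)).
  - by apply: intB; [exact: intS_dot | exact: intS_dot2].
  - by move=> y Sy; have := dot01 x y Sx Sy; rewrite subr_ge0 expr2; nra.
  - rewrite RintegralB //; [|exact: intS_dot|exact: intS_dot2].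
    by rewrite Idot (@iso_S _ _ mu _ iso (supp_sphere _ _ _ m1 _ Sx)) dotvC P1 // subrr.
rewrite expr2 -{1}[dotv z x]mulr1 -mulrBr => /eqP; rewrite mulf_eq0 subr_eq0.
by case/orP => /eqP ->; [left|right].
Qed.

Lemma mass1 s : msupport mu s -> mu [set s] = (d%:R^-1)%:E.
Proof.
move=> Ss; have mS := @supp_mes _ _ mu.
have m1s : measurable ([set s] : set (BorelRd R d)) by apply: closed_mes; exact: set1_closed.
have := @iso_S _ _ mu _ iso (supp_sphere _ _ _ m1 _ Ss).
have -> : I (fun x => dotv x s ^+ 2) = I (fun x => \1_([set s] : set (BorelRd R d)) x).
  apply: eq_Rintegral => z; rewrite inE => Sz; rewrite indicE.
  case: (boolP (z \in [set s])) => [|zs]; first by rewrite inE => ->; rewrite (supp_sphere _ _ _ m1 _ Ss) expr1n.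
  have [|] := P2 s z Ss Sz; first by move=> ->; rewrite expr0n.
  move/(eq_unit _ _ (supp_sphere _ _ _ m1 _ Sz) (supp_sphere _ _ _ m1 _ Ss)) => zs'.
  by exfalso; move: zs; rewrite zs' => /negP; apply; exact: mem_set.
rewrite /Rintegral integral_indic // => h.
have e : [set s] `&` S = [set s] by apply/seteqP; split => [z [] //|z -> ]; split.
rewrite e in h; rewrite -h fineK //.
exact: fin_num_measure.
Qed.

End Ints.

Section Lists.
Context {R : realType} {d : nat} (mu : probability (BorelRd R d) R).

Lemma mes_list (s : seq 'rV[R]_d) : measurable ([set x | x \in s] : set (BorelRd R d)).
Proof.
elim: s => [|a s IH].
  have -> : [set x : 'rV[R]_d | x \in [::]] = set0 by apply/seteqP; split => x //=.
  exact: measurable0.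
have -> : [set x : 'rV[R]_d | x \in a :: s] = [set a] `|` [set x | x \in s].
  apply/seteqP; split => x /=; rewrite in_cons.
    by case/orP => [/eqP ->|]; [left|right].
  by case => [->|->]; rewrite ?eqxx ?orbT.
apply: measurableU => //; apply: closed_mes; exact: set1_closed.
Qed.

Lemma mu_list (A : set (BorelRd R d)) (c : R) (s : seq 'rV[R]_d) : measurable A -> uniq s ->
  (forall x, x \in s -> mu [set x] = c%:E) ->
  mu (A `&` [set x | x \in s]) = (\sum_(x <- s) c%:E * \d_(x : BorelRd R d) A)%E.
Proof.
move=> mA; elim: s => [|a s IH] /=.
  move=> _ _; rewrite big_nil.
  have -> : A `&` [set x : 'rV[R]_d | x \in [::]] = set0 by apply/seteqP; split => x // [].
  exact: measure0.
case/andP => nas us H.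
have m1 : measurable ([set a] : set (BorelRd R d)) by apply: closed_mes; exact: set1_closed.
have -> : A `&` [set x : 'rV[R]_d | x \in a :: s] = (A `&` [set a]) `|` (A `&` [set x | x \in s]).
  apply/seteqP; split => x /=.
    move=> [Ax]; rewrite in_cons => /orP [/eqP xa|xs]; [left|right]; by split.
  case => -[Ax xs]; split => //; rewrite in_cons; last by rewrite xs orbT.
  by rewrite xs eqxx.
rewrite measureU; last 3 first.
- exact: measurableI.
- by apply: measurableI => //; exact: mes_list.
- apply/seteqP; split => // x [[_ ->] [_ /= as']]; by move: nas; rewrite as'.
rewrite big_cons; congr (_ + _)%E; last first.
  by apply: IH => // x xs; apply: H; rewrite in_cons xs orbT.
rewrite diracE.
case: (boolP (a \in A)) => aA.
  have -> : A `&` [set a] = [set a] by apply/seteqP; split => x; [case|move=> ->; split; rewrite // -inE].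
  by rewrite mule1; exact: H (mem_head _ _).
have -> : A `&` [set a] = set0.
  by apply/seteqP; split => // x [Ax xa]; move: aA; rewrite -xa => /negP; apply; exact: mem_set.
by rewrite measure0 mule0.
Qed.

End Lists.

Lemma sum_cst_seq (R : realType) (T : Type) (s : seq T) (c : R) : \sum_(x <- s) c = c *+ size s.
Proof. by elim: s => [|a s IH]; rewrite ?big_nil ?big_cons ?IH ?mulrS. Qed.

Theorem theorem5p1 (R : realType) (d : nat) (mu : probability (BorelRd R d) R) :
  (0 < d)%N ->
  mu (sphere (R:=R) (d:=d)) = 1%E ->
  isotropic mu ->
  (forall x y : 'rV[R]_d, msupport mu x -> msupport mu y -> 0 <= dotv x y) ->
  exists e : 'I_d -> 'rV[R]_d,
    (forall i j : 'I_d, dotv (e i) (e j) = (i == j)%:R) /\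
    (forall A : set (BorelRd R d), measurable A ->
       mu A = (\sum_(j < d) (d%:R^-1)%:E * \d_(e j : BorelRd R d) A)%E).
Proof.
move=> d0 m1 iso pos.
have mS := @supp_mes _ _ mu.
have Sph : forall x, msupport mu x -> sphere x := supp_sphere _ _ _ m1.
have mass : forall x, msupport mu x -> mu [set x] = (d%:R^-1)%:E := mass1 mu m1 iso pos.
have orth : forall x z, msupport mu x -> msupport mu z -> x != z -> dotv z x = 0.
  move=> x z Sx Sz xz; have [//|] := P2 mu m1 iso pos _ _ Sx Sz.
  by move/(eq_unit _ _ (Sph _ Sz) (Sph _ Sx)) => zx; move: xz; rewrite zx eqxx.
have count : forall s, uniq s -> (forall x, x \in s -> msupport mu x) ->
    mu [set x | x \in s] = ((d%:R^-1) *+ size s)%:E.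
  move=> s us sS.
  have -> : [set x : 'rV[R]_d | x \in s] = setT `&` [set x | x \in s] by rewrite setTI.
  rewrite (@mu_list _ _ mu setT (d%:R^-1) s measurableT us); last by move=> x /sS; exact: mass.
  under eq_bigr do rewrite diracE in_setT mule1.
  by rewrite sumEFin sum_cst_seq.
have bound : forall s, uniq s -> (forall x, x \in s -> msupport mu x) -> (size s <= d)%N.
  move=> s us sS; have := probability_le1 mu (@mes_list _ _ s).
  rewrite count // lee_fin -[_ *+ size s]mulr_natr mulrC ler_pdivrMr ?ltr0n // mul1r.
  by rewrite ler_nat.
have [s [us sS Ss]] : exists s, [/\ uniq s, forall x, x \in s -> msupport mu x &
                                  forall x, msupport mu x -> x \in s].
  apply: contrapT => nE.
  have ex : forall n, exists s, [/\ uniq s, size s = n & forall x, x \in s -> msupport mu x].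
    elim => [|n [s [us sz sS]]]; first by exists [::].
    have : ~ forall x, msupport mu x -> x \in s by move=> H; apply: nE; exists s.
    move=> /existsNP [x /not_implyP [Sx /negP xs]].
    exists (x :: s); split => /=; [by rewrite xs us | by rewrite sz |].
    by move=> y; rewrite in_cons => /orP [/eqP ->|/sS].
  have [s [us sz sS]] := ex d.+1.
  by have := bound s us sS; rewrite sz ltnn.
have eS : [set x : 'rV[R]_d | x \in s] = msupport mu.
  by apply/seteqP; split => x; [exact: sS | exact: Ss].
have sd : size s = d.
  have := count s us sS; rewrite eS.
  have -> : (mu : probability _ _) (msupport mu) = 1%E := @supp_one _ _ mu.
  move=> /esym/eqP; rewrite eqe -[_ *+ size s]mulr_natr mulrC => /eqP h.
  have : (size s)%:R = d%:R :> R.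
    by move: h => /(congr1 (fun t => t * d%:R)); rewrite mul1r -mulrA mulVf ?mulr1 // pnatr_eq0 -lt0n.
  by move/eqP; rewrite eqr_nat => /eqP.
exists (fun j : 'I_d => nth 0 s j); split.
  move=> i j.
  have ilt : (i < size s)%N by rewrite sd.
  have jlt : (j < size s)%N by rewrite sd.
  case: (eqVneq i j) => [<-|ij].
    by exact: Sph (sS _ (mem_nth 0 ilt)).
  apply: orth; [exact: sS (mem_nth 0 jlt) | exact: sS (mem_nth 0 ilt) |].
  by rewrite nth_uniq // eq_sym.
move=> A mA.
have e1 : mu A = mu (A `&` [set x | x \in s]).
  have := measureDI mu mA mS.
  have h0 : (mu : {content set (BorelRd R d) -> \bar R}) (A `\` msupport mu) = 0%E.
    apply/eqP; rewrite eq_le measure_ge0 andbT.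
    have <- : mu (~` msupport mu) = 0%E := @nsupp_null _ _ mu.
    apply: le_measure; rewrite ?inE.
    - exact: measurableD.
    - exact: measurableC.
    - by move=> z [].
  by move=> ->; rewrite h0 add0e eS.
rewrite e1 (@mu_list _ _ mu A (d%:R^-1) s mA us); last by move=> x /sS; exact: mass.
rewrite (big_nth 0) sd big_mkord.
by [].
Qed.
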